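(* Let $A$ be a unital C*-algebra and let $F\subseteq\Sigma_\ast$ be closed. Then $F$ is irreducible (i.e. whenever $F=F_1\cup F_2$ with $F_1,F_2$ closed, then $F=F_1$ or $F=F_2$) if and only if: (1) for every $C\in\mathcal C(A)$, if $F_C\ne\emptyset$ then $F_C$ is a singleton; and (2) for all $C_1,C_2\in\mathcal C(A)$ with $F_{C_1}\ne\emptyset$ and $F_{C_2}\ne\emptyset$, there is $C_3\in\mathcal C(A)$ with $C_1,C_2\subseteq C_3$ and $F_{C_3}\neq\emptyset$.
   Context: Let $A$ be a unital C*-algebra. $\mathcal C(A)$ is the poset (under inclusion) of commutative C*-subalgebras of $A$ containing the unit of $A$. For $C\in\mathcal C(A)$, $\Sigma_C$ is its Gelfand spectrum; for $C\subseteq C'$ and $\lambda'\in\Sigma_{C'}$, $\lambda'|_C$ is the restriction. Let $\Sigma=\{(C,\lambda)\mid C\in\mathcal C(A),\lambda\in\Sigma_C\}$ and $U_C=\{\lambda\mid(C,\lambda)\in U\}$ for $U\subseteq\Sigma$. The space $\Sigma_\ast$ is $\Sigma$ with the topology in which $U$ is open iff (1) each $U_C$ is open in $\Sigma_C$, and (2) if $\lambda\in U_C$, $C\subseteq C'$ and $\lambda'\in\Sigma_{C'}$ with $\lambda'|_C=\lambda$, then $\lambda'\in U_{C'}$. *)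

(* Defs.v *)
From Stdlib Require Import Reals List.
Open Scope R_scope.
Set Implicit Arguments.

Definition CC : Type := (R * R)%type.
Definition C0 : CC := (0, 0).
Definition C1 : CC := (1, 0).
Definition Cadd (z w : CC) : CC := (fst z + fst w, snd z + snd w).
Definition Cmul (z w : CC) : CC :=
  (fst z * fst w - snd z * snd w, fst z * snd w + snd z * fst w).
Definition Copp (z : CC) : CC := (- fst z, - snd z).
Definition Cconj (z : CC) : CC := (fst z, - snd z).
Definition Cabs (z : CC) : R := sqrt (fst z * fst z + snd z * snd z).

Record CStarAlgebra := {
  car :> Type;
  zero : car; one : car;
  add : car -> car -> car; opp : car -> car; mul : car -> car -> car;
  scal : CC -> car -> car; star : car -> car; norm : car -> R;
  addA : forall x y z, add x (add y z) = add (add x y) z;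
  addC : forall x y, add x y = add y x;
  add0 : forall x, add zero x = x;
  addN : forall x, add (opp x) x = zero;
  scalDr : forall a x y, scal a (add x y) = add (scal a x) (scal a y);
  scalDl : forall a b x, scal (Cadd a b) x = add (scal a x) (scal b x);
  scalA : forall a b x, scal a (scal b x) = scal (Cmul a b) x;
  scal1 : forall x, scal C1 x = x;
  mulA : forall x y z, mul x (mul y z) = mul (mul x y) z;
  mul1l : forall x, mul one x = x;
  mul1r : forall x, mul x one = x;
  mulDl : forall x y z, mul (add x y) z = add (mul x z) (mul y z);
  mulDr : forall x y z, mul x (add y z) = add (mul x y) (mul x z);
  scalMl : forall a x y, scal a (mul x y) = mul (scal a x) y;
  scalMr : forall a x y, scal a (mul x y) = mul x (scal a y);
  starK : forall x, star (star x) = x;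
  starD : forall x y, star (add x y) = add (star x) (star y);
  starZ : forall a x, star (scal a x) = scal (Cconj a) (star x);
  starM : forall x y, star (mul x y) = mul (star y) (star x);
  norm_eq0 : forall x, norm x = 0 -> x = zero;
  norm_triangle : forall x y, norm (add x y) <= norm x + norm y;
  normZ : forall a x, norm (scal a x) = Cabs a * norm x;
  normM : forall x y, norm (mul x y) <= norm x * norm y;
  complete : forall u : nat -> car,
    (forall eps, eps > 0 -> exists N, forall n m, (n >= N)%nat -> (m >= N)%nat ->
        norm (add (u n) (opp (u m))) < eps) ->
    exists l, forall eps, eps > 0 -> exists N, forall n, (n >= N)%nat ->
        norm (add (u n) (opp l)) < eps;
  cstar_id : forall x, norm (mul (star x) x) = norm x * norm x
}.

Section Defs.
Variable A : CStarAlgebra.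

Definition converges (u : nat -> A) (l : A) : Prop :=
  forall eps, eps > 0 -> exists N, forall n, (n >= N)%nat ->
    norm A (add A (u n) (opp A l)) < eps.

Definition is_comm_unital_subalg (C : A -> Prop) : Prop :=
  C (one A) /\
  (forall x y, C x -> C y -> C (add A x y)) /\
  (forall a x, C x -> C (scal A a x)) /\
  (forall x y, C x -> C y -> C (mul A x y)) /\
  (forall x, C x -> C (star A x)) /\
  (forall u l, (forall n, C (u n)) -> converges u l -> C l) /\
  (forall x y, C x -> C y -> mul A x y = mul A y x).

Definition CA : Type := { C : A -> Prop | is_comm_unital_subalg C }.

Definition subalg_le (C C' : CA) : Prop := forall a, proj1_sig C a -> proj1_sig C' a.

(* Gelfand spectrum of C: nonzero multiplicative linear functionals on C.
   A functional on C is encoded as a function A -> CC which vanishes outside C. *)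
Definition is_character (C : A -> Prop) (l : A -> CC) : Prop :=
  (forall x y, C x -> C y -> l (add A x y) = Cadd (l x) (l y)) /\
  (forall a x, C x -> l (scal A a x) = Cmul a (l x)) /\
  (forall x y, C x -> C y -> l (mul A x y) = Cmul (l x) (l y)) /\
  (exists x, C x /\ l x <> C0) /\
  (forall x, ~ C x -> l x = C0).

Definition Spec (C : CA) : Type := { l : A -> CC | is_character (proj1_sig C) l }.

Definition spec_open (C : CA) (V : Spec C -> Prop) : Prop :=
  forall l, V l -> exists (s : list A) (eps : R), eps > 0 /\
    (forall a, In a s -> proj1_sig C a) /\
    forall m : Spec C,
      (forall a, In a s ->
         Cabs (Cadd (proj1_sig m a) (Copp (proj1_sig l a))) < eps) -> V m.

Definition restricts (C C' : CA) (l' : Spec C') (l : Spec C) : Prop :=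
  forall a, proj1_sig C a -> proj1_sig l' a = proj1_sig l a.

(* Subsets of Sigma = { (C, l) | C in C(A), l in Spec C }; U C is U_C. *)
Definition SigmaSet : Type := forall C : CA, Spec C -> Prop.

Definition sigma_open (U : SigmaSet) : Prop :=
  (forall C, spec_open (U C)) /\
  (forall (C C' : CA) (l : Spec C) (l' : Spec C'),
      U C l -> subalg_le C C' -> restricts l' l -> U C' l').

Definition sigma_closed (F : SigmaSet) : Prop :=
  sigma_open (fun C l => ~ F C l).

Definition set_eq (U V : SigmaSet) : Prop := forall C l, U C l <-> V C l.
Definition set_union (U V : SigmaSet) : SigmaSet := fun C l => U C l \/ V C l.

Definition irreducible (F : SigmaSet) : Prop :=
  forall F1 F2 : SigmaSet, sigma_closed F1 -> sigma_closed F2 ->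
    set_eq F (set_union F1 F2) -> set_eq F F1 \/ set_eq F F2.

End Defs.

(* Main.v *)
Require Import Defs.
From Stdlib Require Import Reals List.
From Stdlib Require Import Classical ClassicalEpsilon FunctionalExtensionality Lra.
Open Scope R_scope.

Section Aux.
Context {A : CStarAlgebra}.

Lemma char_one {C : CA A} (l : Spec C) : proj1_sig l (one A) <> C0.
Proof.
  destruct l as [f [hadd [hsc [hmul [[x [hx hne]] hout]]]]]; simpl.
  destruct (proj2_sig C) as [h1 _].
  intro h. apply hne. rewrite <- (mul1r A x). rewrite hmul; auto.
  rewrite h. unfold Cmul, C0; simpl; f_equal; ring.
Qed.

Definition resf (C : CA A) (f : A -> CC) : A -> CC :=
  fun a => if excluded_middle_informative (proj1_sig C a) then f a else C0.

Lemma res_char {C C' : CA A} (h : subalg_le C C') (l' : Spec C') :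
  is_character A (proj1_sig C) (resf C (proj1_sig l')).
Proof.
  destruct (proj2_sig C) as [h1 [hadd [hsc [hmul [hst [hlim hcomm]]]]]].
  pose proof (char_one l') as hone.
  destruct (proj2_sig l') as [ladd [lsc [lmul [lnz lout]]]].
  unfold is_character, resf. repeat split.
  - intros x y hx hy. repeat destruct excluded_middle_informative; try tauto; try (exfalso; match goal with n : ~ _ |- _ => apply n; auto end; fail).
    apply ladd; apply h; auto.
  - intros a x hx. repeat destruct excluded_middle_informative; try tauto; try (exfalso; match goal with n : ~ _ |- _ => apply n; auto end; fail).
    apply lsc; apply h; auto.
  - intros x y hx hy. repeat destruct excluded_middle_informative; try tauto; try (exfalso; match goal with n : ~ _ |- _ => apply n; auto end; fail).
    apply lmul; apply h; auto.
  - exists (one A). split; auto. destruct excluded_middle_informative; tauto.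
  - intros x hx. destruct excluded_middle_informative; tauto.
Qed.

Definition res {C C' : CA A} (h : subalg_le C C') (l' : Spec C') : Spec C :=
  exist _ _ (res_char h l').

Lemma res_restricts {C C' : CA A} (h : subalg_le C C') (l' : Spec C') :
  restricts l' (res h l').
Proof.
  intros a ha. unfold res, resf; simpl. destruct excluded_middle_informative; tauto.
Qed.

Lemma closed_down (G : SigmaSet A) (hG : sigma_closed G) (C C' : CA A)
  (l' : Spec C') (k : Spec C) : G C' l' -> subalg_le C C' -> restricts l' k -> G C k.
Proof.
  intros hg hle hr. apply NNPP; intro hn.
  exact (proj2 hG C C' k l' hn hle hr hg).
Qed.

Lemma closed_minus {F O : SigmaSet A} (hF : sigma_closed F) (hO : sigma_open O) :
  sigma_closed (fun C l => F C l /\ ~ O C l).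
Proof.
  unfold sigma_closed, sigma_open in *. destruct hF as [hF1 hF2], hO as [hO1 hO2].
  split.
  - intros C l hl. destruct (classic (F C l)) as [hf|hf].
    + assert (ho : O C l) by (apply NNPP; intro; apply hl; tauto).
      destruct (hO1 C l ho) as [s [eps [he [hs hm]]]].
      exists s, eps; repeat split; auto. intros m hmm [_ hom]. apply hom; auto.
    + destruct (hF1 C l hf) as [s [eps [he [hs hm]]]].
      exists s, eps; repeat split; auto. intros m hmm [hfm _]. exact (hm m hmm hfm).
  - intros C C' l l' hl hle hr [hf ho]. destruct (classic (F C l)).
    + apply ho. eapply hO2; eauto. apply NNPP; intro; apply hl; tauto.
    + eapply hF2; eauto.
Qed.

Lemma split_lemma {F : SigmaSet A} (hF : sigma_closed F) (hirr : irreducible F)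
  (O1 O2 : SigmaSet A) : sigma_open O1 -> sigma_open O2 ->
  (forall C l, F C l -> O1 C l -> O2 C l -> False) ->
  (forall C l, F C l -> ~ O1 C l) \/ (forall C l, F C l -> ~ O2 C l).
Proof.
  intros h1 h2 hd.
  destruct (hirr (fun C l => F C l /\ ~ O1 C l) (fun C l => F C l /\ ~ O2 C l)
     (closed_minus hF h1) (closed_minus hF h2)) as [e|e].
  - intros C l; unfold set_union; split.
    + intro hf. destruct (classic (O1 C l)); [right|left]; split; auto.
      intro; eapply hd; eauto.
    + intros [[? _]|[? _]]; auto.
  - left. intros C l hf. apply (proj1 (e C l) hf).
  - right. intros C l hf. apply (proj1 (e C l) hf).
Qed.

Lemma Rabs_tri3 (x y z : R) : Rabs (x - z) <= Rabs (x - y) + Rabs (y - z).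
Proof.
  replace (x - z) with ((x - y) + (y - z)) by ring. apply Rabs_triang.
Qed.

Lemma Cabs_fst (z w : CC) : Rabs (fst z - fst w) <= Cabs (Cadd z (Copp w)).
Proof.
  unfold Cabs, Cadd, Copp; simpl. rewrite <- sqrt_Rsqr_abs. apply sqrt_le_1_alt.
  unfold Rsqr. replace (fst z + - fst w) with (fst z - fst w) by ring.
  pose proof (Rle_0_sqr (snd z + - snd w)). unfold Rsqr in H. lra.
Qed.

Lemma Cabs_snd (z w : CC) : Rabs (snd z - snd w) <= Cabs (Cadd z (Copp w)).
Proof.
  unfold Cabs, Cadd, Copp; simpl. rewrite <- sqrt_Rsqr_abs. apply sqrt_le_1_alt.
  unfold Rsqr. replace (snd z + - snd w) with (snd z - snd w) by ring.
  pose proof (Rle_0_sqr (fst z + - fst w)). unfold Rsqr in H. lra.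
Qed.

Definition ball (pr : CC -> R) (C : CA A) (a : A) (x0 r : R) : SigmaSet A :=
  fun C' l' => subalg_le C C' /\ Rabs (pr (proj1_sig l' a) - x0) < r.

Lemma ball_open (pr : CC -> R)
  (hpr : forall z w, Rabs (pr z - pr w) <= Cabs (Cadd z (Copp w)))
  {C : CA A} {a : A} (ha : proj1_sig C a) (x0 r : R) : sigma_open (ball pr C a x0 r).
Proof.
  split.
  - intros C' l' [hle hlt]. exists (a :: nil), (r - Rabs (pr (proj1_sig l' a) - x0)).
    split; [lra|]. split.
    + intros b [<-|[]]. apply hle; auto.
    + intros m hm. split; auto. specialize (hm a (or_introl eq_refl)).
      pose proof (hpr (proj1_sig m a) (proj1_sig l' a)).
      pose proof (Rabs_tri3 (pr (proj1_sig m a)) (pr (proj1_sig l' a)) x0). lra.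
  - intros C' C'' l' l'' [hle hlt] hle' hr. split.
    + intros b hb; auto.
    + rewrite hr; auto.
Qed.

Lemma spec_ext (C : CA A) (l m : Spec C) : proj1_sig l = proj1_sig m -> l = m.
Proof.
  destruct l as [fl pl], m as [fm pm]; simpl; intros ->. f_equal. apply proof_irrelevance.
Qed.

End Aux.

Theorem lemma2p24 (A : CStarAlgebra) (F : SigmaSet A) (hF : sigma_closed F) :
  irreducible F <->
  ((forall C : CA A, (exists l, F C l) -> exists l, F C l /\ forall m, F C m -> m = l) /\
   (forall C1 C2 : CA A, (exists l, F C1 l) -> (exists l, F C2 l) ->
      exists C3 : CA A, subalg_le C1 C3 /\ subalg_le C2 C3 /\ exists l, F C3 l)).
Proof.
  split.
  - intro hirr. split.
    + intros C [l hl]. exists l; split; auto. intros m hm.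
      apply NNPP; intro hne.
      assert (hex : exists a, proj1_sig m a <> proj1_sig l a).
      { apply NNPP; intro hn. apply hne. apply spec_ext.
        apply functional_extensionality; intro a.
        apply NNPP; intro; apply hn; eauto. }
      destruct hex as [a ha].
      assert (haC : proj1_sig C a).
      { apply NNPP; intro hn. apply ha.
        rewrite (proj2 (proj2 (proj2 (proj2 (proj2_sig m)))) a hn).
        rewrite (proj2 (proj2 (proj2 (proj2 (proj2_sig l)))) a hn). auto. }
      assert (hgen : forall pr : CC -> R,
        (forall z w, Rabs (pr z - pr w) <= Cabs (Cadd z (Copp w))) ->
        pr (proj1_sig m a) <> pr (proj1_sig l a) -> False).
      { intros pr hpr hd.
        set (d := Rabs (pr (proj1_sig m a) - pr (proj1_sig l a))).
        assert (hd0 : 0 < d) by (apply Rabs_pos_lt; lra).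
        destruct (split_lemma hF hirr _ _
          (ball_open pr hpr haC (pr (proj1_sig l a)) (d/2))
          (ball_open pr hpr haC (pr (proj1_sig m a)) (d/2))) as [h|h].
        * intros C' l' _ [_ h1] [_ h2].
          pose proof (Rabs_tri3 (pr (proj1_sig m a)) (pr (proj1_sig l' a)) (pr (proj1_sig l a))).
          rewrite <- Rabs_Ropp in h2.
          replace (- (pr (proj1_sig l' a) - pr (proj1_sig m a))) with
            (pr (proj1_sig m a) - pr (proj1_sig l' a)) in h2 by ring.
          fold d in H. lra.
        * apply (h C l hl). split; [intros b hb; auto|].
          rewrite Rminus_diag, Rabs_R0. lra.
        * apply (h C m hm). split; [intros b hb; auto|].
          rewrite Rminus_diag, Rabs_R0. lra. }
      destruct (proj1_sig m a) as [m1 m2] eqn:e1, (proj1_sig l a) as [l1 l2] eqn:e2.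
      destruct (Req_dec m1 l1) as [E1|E1].
      * destruct (Req_dec m2 l2) as [E2|E2].
        -- apply ha; subst; auto.
        -- apply (hgen snd (@Cabs_snd)). simpl; auto.
      * apply (hgen fst (@Cabs_fst)). simpl; auto.
    + intros C1 C2 [l1 h1] [l2 h2]. apply NNPP; intro hno.
      destruct (@split_lemma _ F hF hirr (fun C l => subalg_le C1 C)
                  (fun C l => subalg_le C2 C)) as [h|h].
      * split.
        -- intros C l hl. exists nil, 1. repeat split; try lra.
           intros a []. intros; assumption.
        -- intros C C' l l' hl hle _ b hb; auto.
      * split.
        -- intros C l hl. exists nil, 1. repeat split; try lra.
           intros a []. intros; assumption.
        -- intros C C' l l' hl hle _ b hb; auto.
      * intros C l hf o1 o2. apply hno. exists C; eauto.
      * apply (h C1 l1 h1). intros b hb; auto.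
      * apply (h C2 l2 h2). intros b hb; auto.
  - intros [H1 H2] F1 F2 hF1 hF2 e.
    apply NNPP; intro hn.
    assert (hx1 : exists C l, F C l /\ ~ F1 C l).
    { apply NNPP; intro hc. apply hn. left. intros C l; split.
      - intro hf. apply NNPP; intro; apply hc; eauto.
      - intro; apply (proj2 (e C l)); left; auto. }
    assert (hx2 : exists C l, F C l /\ ~ F2 C l).
    { apply NNPP; intro hc. apply hn. right. intros C l; split.
      - intro hf. apply NNPP; intro; apply hc; eauto.
      - intro; apply (proj2 (e C l)); right; auto. }
    destruct hx1 as [C1 [l1 [hf1 hn1]]], hx2 as [C2 [l2 [hf2 hn2]]].
    destruct (H2 C1 C2 (ex_intro _ l1 hf1) (ex_intro _ l2 hf2))
      as [C3 [hle1 [hle2 [l3 hf3]]]].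
    destruct (proj1 (e C3 l3) hf3) as [g|g].
    + set (k := res hle1 l3).
      assert (hk1 : F1 C1 k) by (eapply closed_down; eauto; apply res_restricts).
      assert (hkF : F C1 k) by (apply (proj2 (e C1 k)); left; auto).
      destruct (H1 C1 (ex_intro _ l1 hf1)) as [l0 [_ hu]].
      apply hn1. rewrite (hu l1 hf1), <- (hu k hkF). auto.
    + set (k := res hle2 l3).
      assert (hk2 : F2 C2 k) by (eapply closed_down; eauto; apply res_restricts).
      assert (hkF : F C2 k) by (apply (proj2 (e C2 k)); right; auto).
      destruct (H1 C2 (ex_intro _ l2 hf2)) as [l0 [_ hu]].
      apply hn2. rewrite (hu l2 hf2), <- (hu k hkF). auto.
Qed.
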